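(* Let $d\in\mathbb N$. Then: (1) for each $j=1,\dots,d$ and each bounded linear operator $T:C_0(\mathbb R)\to C_0(\mathbb R)$ there is a unique bounded linear operator $\mathcal T^j:C_0(\mathbb R^d)\to C_0(\mathbb R^d)$ such that for every $f\in C_0(\mathbb R^d)$ and every $x\in\mathbb R^d$, $$(\mathcal T^jf)(x_1,\dots,x_d)=\bigl(T(f(x_1,\dots,x_{j-1},\cdot,x_{j+1},\dots,x_d))\bigr)(x_j);$$ (2) for each $j$, the map $V_j:T\mapsto\mathcal T^j$ is a continuous homomorphism of the Banach algebra $\mathcal B(C_0(\mathbb R),C_0(\mathbb R))$ into the Banach algebra $\mathcal B(C_0(\mathbb R^d),C_0(\mathbb R^d))$; (3) for all $S,T\in\mathcal B(C_0(\mathbb R),C_0(\mathbb R))$ and all $i\ne j$, $V_i(S)V_j(T)f=V_j(T)V_i(S)f$ for every $f\in C_0(\mathbb R^d)$.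
   Context: $C_0(\mathbb R^d)$ is the Banach space of continuous real functions on $\mathbb R^d$ tending to $0$ at infinity, with the sup norm; $\mathcal B(X,X)$ is the Banach algebra of bounded linear operators on $X$ with the operator norm. *)

(* Defs.v *)
From HB Require Import structures.
From mathcomp Require Import all_boot all_order all_algebra.
From mathcomp Require Import all_classical all_reals all_analysis.
Set Implicit Arguments. Unset Strict Implicit. Unset Printing Implicit Defensive.
Import Order.TTheory GRing.Theory Num.Theory.
Import numFieldNormedType.Exports.
Local Open Scope classical_set_scope.
Local Open Scope ring_scope.

Section Defs.
Variable R : realType.

Definition supn (X : Type) (f : X -> R) : R := sup (range (fun x => `|f x|)).

Definition C0 (d : nat) : set ('rV[R]_d -> R) :=
  [set f | continuous f /\
     (forall e : R, 0 < e -> exists M : R, forall x, M < `|x| -> `|f x| < e)].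

Definition C0R : set (R -> R) :=
  [set f | continuous f /\
     (forall e : R, 0 < e -> exists M : R, forall x : R, M < `|x| -> `|f x| < e)].

Definition bdd_op (X : Type) (A : set (X -> R)) (T : (X -> R) -> (X -> R)) : Prop :=
  [/\ (forall f, A f -> A (T f)),
      (forall (a : R) f g, A f -> A g ->
          T (fun x => a * f x + g x) = (fun x => a * T f x + T g x))
    & exists C : R, forall f, A f -> supn (T f) <= C * supn f].

Definition opnorm (X : Type) (A : set (X -> R)) (T : (X -> R) -> (X -> R)) : R :=
  sup [set supn (T f) | f in [set f | A f /\ supn f <= 1]].

Definition op_eq (X : Type) (A : set (X -> R)) (U V : (X -> R) -> (X -> R)) : Prop :=
  forall f, A f -> U f = V f.

Definition op_add (X : Type) (U V : (X -> R) -> (X -> R)) : (X -> R) -> (X -> R) :=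
  fun f x => U f x + V f x.
Definition op_opp (X : Type) (U : (X -> R) -> (X -> R)) : (X -> R) -> (X -> R) :=
  fun f x => - U f x.
Definition op_scale (X : Type) (a : R) (U : (X -> R) -> (X -> R)) : (X -> R) -> (X -> R) :=
  fun f x => a * U f x.

Definition slice (d : nat) (f : 'rV[R]_d -> R) (j : 'I_d) (x : 'rV[R]_d) : R -> R :=
  fun t => f (\row_k (if k == j then t else x 0 k)).

Definition Vop (d : nat) (j : 'I_d) (T : (R -> R) -> (R -> R)) :
  ('rV[R]_d -> R) -> ('rV[R]_d -> R) :=
  fun f x => T (slice f j x) (x 0 j).

End Defs.

(* Main.v *)
Require Import Defs.
From HB Require Import structures.
From mathcomp Require Import all_boot all_order all_algebra.
From mathcomp Require Import all_classical all_reals all_analysis.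
From mathcomp Require Import lra ring.
Set Implicit Arguments. Unset Strict Implicit. Unset Printing Implicit Defensive.
Import Order.TTheory GRing.Theory Num.Theory.
Import numFieldNormedType.Exports.
Local Open Scope classical_set_scope.
Local Open Scope ring_scope.

Definition upd (R : realType) (d : nat) (x : 'rV[R]_d) (j : 'I_d) (c : R) : 'rV[R]_d :=
  \row_k (if k == j then c else x 0 k).

Lemma sliceE (R : realType) d (f : 'rV[R]_d -> R) j x t : slice f j x t = f (upd x j t).
Proof. by []. Qed.

Lemma upd_j (R : realType) d (x : 'rV[R]_d) j c : upd x j c 0 j = c.
Proof. by rewrite /upd mxE eqxx. Qed.

Lemma upd_l (R : realType) d (x : 'rV[R]_d) j c l : l != j -> upd x j c 0 l = x 0 l.
Proof. by move=> /negbTE h; rewrite /upd mxE h. Qed.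

Lemma upd_upd (R : realType) d (x : 'rV[R]_d) j t c : upd (upd x j t) j c = upd x j c.
Proof.
by apply/rowP => l; rewrite /upd !mxE; case: eqP.
Qed.

Lemma upd_comm (R : realType) d (x : 'rV[R]_d) i j s c : i != j ->
  upd (upd x i s) j c = upd (upd x j c) i s.
Proof.
move=> ij; apply/rowP => l; rewrite /upd !mxE.
case: (eqVneq l j) => [->|lj]; first by rewrite eq_sym (negbTE ij).
by [].
Qed.

Lemma row_norm_ge (R : realType) d (x : 'rV[R]_d) l : `|x 0 l| <= `|x|.
Proof.
rewrite [leRHS]/Num.Def.normr /= mx_normrE.
by apply: (le_trans _ (le_bigmax _ _ (0, l))).
Qed.

Lemma row_norm_le (R : realType) d (x : 'rV[R]_d) B : 0 <= B ->
  (forall l, `|x 0 l| <= B) -> `|x| <= B.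
Proof.
move=> B0 h; rewrite [leLHS]/Num.Def.normr /= mx_normrE.
apply/bigmax_leP; split => // -[i l] _ /=.
by rewrite (ord1 i).
Qed.


Lemma supn_ge (R : realType) X (f : X -> R) B x :
  (forall y, `|f y| <= B) -> `|f x| <= supn f.
Proof.
move=> hB; rewrite /supn; apply: ub_le_sup; last by exists x.
by exists B => _ [y _ <-]; exact: hB.
Qed.

Lemma supn_le (R : realType) X (f : X -> R) B (x0 : X) :
  (forall y, `|f y| <= B) -> supn f <= B.
Proof.
move=> hB; rewrite /supn; apply: ge_sup; first by exists `|f x0|, x0.
by move=> _ [y _ <-]; exact: hB.
Qed.

Lemma supn_ge0 (R : realType) X (f : X -> R) B (x0 : X) :
  (forall y, `|f y| <= B) -> 0 <= supn f.
Proof. by move=> hB; exact: le_trans (supn_ge x0 hB). Qed.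

Lemma ball_compact (R : realType) d (r : R) : 0 < r ->
  compact [set x : 'rV[R]_d | `|x| <= r].
Proof.
move=> r0.
have -> : [set x : 'rV[R]_d | `|x| <= r] = closed_ball 0 r.
  by rewrite closed_ballE //; apply/seteqP; split => x /=; rewrite /closed_ball_ /= distrC subr0.
apply: bounded_closed_compact; last exact: closed_ball_closed.
exists r; split; first by rewrite realE ltW.
move=> M rM y; rewrite closed_ballE // /closed_ball_ /= distrC subr0 => hy.
by rewrite (le_trans hy) // ltW.
Qed.

Lemma C0_bounded (R : realType) d (f : 'rV[R]_d -> R) : C0 f ->
  exists B, forall x, `|f x| <= B.
Proof.
move=> [cf vf]; have [M hM] := vf 1 ltr01.
have r0 : 0 < `|M| + 1 by rewrite ltr_pwDr // normr_ge0.
have [c _ hc] : exists2 c, c \in [set x : 'rV[R]_d | `|x| <= `|M| + 1] &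
    forall t, t \in [set x : 'rV[R]_d | `|x| <= `|M| + 1] -> `|f t| <= `|f c|.
  apply: (@EVT_max_rV _ _ (fun x => `|f x|)).
  - by exists 0; rewrite /= normr0 ltW.
  - exact: ball_compact.
  - apply: continuous_subspaceT => x.
    exact: (continuous_comp (cf x) (@norm_continuous _ _ _)).
exists (Num.max `|f c| 1) => x; rewrite le_max.
have [hx|hx] := leP `|x| (`|M| + 1).
  by rewrite hc // inE.
apply/orP; right; apply: ltW; apply: hM.
by rewrite (le_lt_trans (ler_norm M)) // (lt_trans _ hx) // ltrDl.
Qed.

Lemma C0R_bounded (R : realType) (f : R -> R) : C0R f ->
  exists B, forall x, `|f x| <= B.
Proof.
move=> [cf vf]; have [M hM] := vf 1 ltr01.
have [c _ hc] := @EVT_max _ (fun x => `|f x|) (- `|M|) `|M|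
   ((ge0_cp (normr_ge0 M)).2) (continuous_subspaceT (fun x => continuous_comp (cf x) (@norm_continuous _ _ _))).
exists (Num.max `|f c| 1) => x; rewrite le_max.
have [hx|hx] := leP `|x| `|M|.
  by rewrite hc // in_itv /= -ler_norml.
apply/orP; right; apply: ltW; apply: hM.
by rewrite (le_lt_trans (ler_norm M)).
Qed.


Definition C0g (R : realType) (V : normedModType R) (f : V -> R) : Prop :=
  continuous f /\
  (forall e : R, 0 < e -> exists M : R, forall x, M < `|x| -> `|f x| < e).

Lemma C0RE (R : realType) (f : R -> R) : C0R f = C0g f.
Proof. by []. Qed.

Lemma C0E (R : realType) d (f : 'rV[R]_d -> R) : C0 f = C0g f.
Proof. by []. Qed.

Lemma lip_continuous (R : realType) (V W : normedModType R) (h : V -> W) :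
  (forall a b, `|h a - h b| <= `|a - b|) -> continuous h.
Proof.
move=> hL x; apply/cvgrPdist_lt => e e0.
near=> y; apply: le_lt_trans (hL x y) _.
near: y; exact: (@cvgr_dist_lt _ _ _ _ _ (fun y => y) x (@cvg_id _ _) _ e0).
Unshelve. all: by end_near.
Qed.

Lemma C0g0 (R : realType) (V : normedModType R) : C0g (fun _ : V => (0:R)).
Proof.
split; first by move=> x; exact: cvg_cst.
by move=> e e0; exists 0 => x _; rewrite normr0.
Qed.

Lemma C0g_lin (R : realType) (V : normedModType R) (a : R) (f g : V -> R) :
  C0g f -> C0g g -> C0g (fun t => a * f t + g t).
Proof.
move=> [cf vf] [cg vg]; split.
  move=> x; apply: cvgD; last exact: cg.
  by apply: cvgM; [exact: cvg_cst | exact: cf].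
move=> e e0.
have e1 : 0 < e / 2 / (`|a| + 1) by rewrite divr_gt0 // ?divr_gt0 // ltr_pwDr.
have [M1 h1] := vf _ e1; have [M2 h2] := vg (e / 2) (divr_gt0 e0 (ltr0Sn _ 1)).
exists (Num.max M1 M2) => x; rewrite gt_max => /andP[x1 x2].
have := h1 _ x1; have := h2 _ x2.
have a1 : 0 < `|a| + 1 by have := normr_ge0 a; lra.
move=> hg hf; move: hf; rewrite ltr_pdivlMr // => hf.
rewrite (le_lt_trans (ler_normD _ _)) // normrM.
have : `|a| * `|f x| <= `|f x| * (`|a| + 1).
  by rewrite mulrDr mulr1 mulrC ler_wpDr.
move=> H; have H1 := le_lt_trans H hf.
lra.
Qed.


Lemma coord_lip (R : realType) d (j : 'I_d) (x y : 'rV[R]_d) :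
  `|x 0 j - y 0 j| <= `|x - y|.
Proof.
have -> : x 0 j - y 0 j = (x - y) 0 j by rewrite !mxE.
exact: row_norm_ge.
Qed.

Lemma upd_lip_t (R : realType) d (x : 'rV[R]_d) j (t s : R) :
  `|upd x j t - upd x j s| <= `|t - s|.
Proof.
apply: row_norm_le => // l; rewrite /upd !mxE.
by case: eqP => _ //; rewrite subrr normr0.
Qed.

Lemma upd_lip_x (R : realType) d (x y : 'rV[R]_d) j c :
  `|upd x j c - upd y j c| <= `|x - y|.
Proof.
apply: row_norm_le => // l; rewrite /upd !mxE.
case: eqP => _; first by rewrite subrr normr0.
have -> : x 0 l - y 0 l = (x - y) 0 l by rewrite !mxE.
exact: row_norm_ge.
Qed.

Lemma norm_upd_j (R : realType) d (x : 'rV[R]_d) j t : `|t| <= `|upd x j t|.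
Proof. by rewrite -{1}(upd_j x j t) row_norm_ge. Qed.

Lemma norm_upd_l (R : realType) d (x : 'rV[R]_d) j c l : l != j ->
  `|x 0 l| <= `|upd x j c|.
Proof. by move=> lj; rewrite -(upd_l x c lj) row_norm_ge. Qed.

Lemma norm_exists (R : realType) d (x : 'rV[R]_d) (M : R) : 0 <= M -> M < `|x| ->
  exists l, M < `|x 0 l|.
Proof.
move=> M0 Mx; apply: contrapT => hn.
have : `|x| <= M.
  apply: row_norm_le => // l; rewrite leNgt; apply/negP => hl.
  by apply: hn; exists l.
by rewrite leNgt Mx.
Qed.

Lemma C0g_boundedP (R : realType) (V : normedModType R) (f : V -> R) :
  (exists B, forall x, `|f x| <= B) -> exists2 B, 0 < B & forall x, `|f x| <= B.
Proof.
move=> [B hB]; exists (`|B| + 1); first by have := normr_ge0 B; lra.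
move=> x; apply: (le_trans (hB x)); have := ler_norm B; lra.
Qed.

Lemma slice_C0 (R : realType) d (f : 'rV[R]_d -> R) j x : C0 f -> C0R (slice f j x).
Proof.
move=> [cf vf]; split.
  move=> t; change ({for t, continuous (f \o upd x j)}).
  have h1 := (lip_continuous (@upd_lip_t R d x j)).
  have h2 := continuous_comp (h1 t) (cf _); exact: h2.
move=> e e0; have [M hM] := vf e e0; exists M => t Mt.
rewrite sliceE; apply: hM; exact: (lt_le_trans Mt (norm_upd_j x j t)).
Qed.

Lemma C0_prod (R : realType) d (j : 'I_d) (g : R -> R) (f : 'rV[R]_d -> R) c :
  C0R g -> C0 f -> C0 (fun x => g (x 0 j) * f (upd x j c)).
Proof.
move=> hg hf.
have [Bg Bg0 hBg] := C0g_boundedP (C0R_bounded hg).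
have [Bf Bf0 hBf] := C0g_boundedP (C0_bounded hf).
case: hg => cg vg; case: hf => cf vf; split.
  move=> x.
  have h1 := lip_continuous (@coord_lip R d j).
  have h2 := continuous_comp (h1 x) (cg _).
  have h3 := lip_continuous (fun a b => @upd_lip_x R d a b j c).
  have h4 := continuous_comp (h3 x) (cf _).
  exact: (continuousM h2 h4).
move=> e e0.
have [M1 h1] := vg (e / Bf) (divr_gt0 e0 Bf0).
have [M2 h2] := vf (e / Bg) (divr_gt0 e0 Bg0).
exists (Num.max 0 (Num.max M1 M2)) => x xM.
have M0 : 0 <= Num.max 0 (Num.max M1 M2) by rewrite le_max lexx.
have [l hl] := norm_exists M0 xM.
move: hl; rewrite !gt_max => /andP[_ /andP[hl1 hl2]].
rewrite normrM.
case: (eqVneq l j) => [E | lj].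
- rewrite E in hl1; have := h1 _ hl1; rewrite ltr_pdivlMr // => H.
  apply: le_lt_trans H; by apply: ler_pM; rewrite ?normr_ge0 ?hBf.
- have := h2 _ (lt_le_trans hl2 (norm_upd_l x c lj)); rewrite ltr_pdivlMr // => H.
  apply: le_lt_trans H; rewrite mulrC; by apply: ler_pM; rewrite ?normr_ge0 ?hBg.
Qed.

Lemma C0g_sum (R : realType) (V : normedModType R) n (F : nat -> V -> R) :
  (forall k, C0g (F k)) -> C0g (fun x => \sum_(k < n) F k x).
Proof.
move=> hF; elim: n => [|n IH].
  have -> : (fun x : V => \sum_(k < 0) F k x) = (fun _ => 0) by apply: funext => x; rewrite big_ord0.
  exact: C0g0.
have -> : (fun x : V => \sum_(k < n.+1) F k x) = (fun x => 1 * F n x + \sum_(k < n) F k x).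
  by apply: funext => x; rewrite big_ord_recr /= mul1r addrC.
exact: C0g_lin.
Qed.

Lemma C0g_scale (R : realType) (V : normedModType R) a (g : V -> R) :
  C0g g -> C0g (fun x => a * g x).
Proof.
move=> h; have := C0g_lin a h (@C0g0 R V).
by have -> : (fun x => a * g x + 0) = (fun x => a * g x) by apply: funext => x; rewrite addr0.
Qed.


Lemma bdd_bound (R : realType) (T : (R -> R) -> (R -> R)) : bdd_op (@C0R R) T ->
  exists2 C, 0 <= C & forall g, C0R g -> forall t, `|T g t| <= C * supn g.
Proof.
move=> [hmap hlin [C hC]]; exists (Num.max C 0); first by rewrite le_max lexx orbT.
move=> g hg t.
have [B hB] := C0R_bounded (hmap _ hg).
have [B' hB'] := C0R_bounded hg.
apply: (le_trans (supn_ge t hB)); apply: (le_trans (hC _ hg)).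
by apply: ler_wpM2r; [exact: (supn_ge0 0 hB') | rewrite le_max lexx].
Qed.

Lemma T0 (R : realType) (T : (R -> R) -> (R -> R)) : bdd_op (@C0R R) T ->
  T (fun _ => 0) = (fun _ => 0).
Proof.
move=> [hmap hlin _].
have := hlin (-1) _ _ (@C0g0 R R) (@C0g0 R R).
have -> : (fun x : R => -1 * 0 + 0) = (fun _ => 0 : R) by apply: funext => x; rewrite mulr0 addr0.
by move=> E; rewrite {1}E; apply: funext => x; rewrite mulN1r addNr.
Qed.

Lemma T_sum (R : realType) (T : (R -> R) -> (R -> R)) : bdd_op (@C0R R) T ->
  forall n (a : nat -> R) (g : nat -> R -> R), (forall k, C0R (g k)) ->
  T (fun t => \sum_(k < n) a k * g k t) = (fun t => \sum_(k < n) a k * T (g k) t).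
Proof.
move=> hT n a g hg; elim: n => [|n IH].
  have -> : (fun t : R => \sum_(k < 0) a k * g k t) = (fun _ => 0) by apply: funext => x; rewrite big_ord0.
  by rewrite (T0 hT); apply: funext => x; rewrite big_ord0.
have -> : (fun t : R => \sum_(k < n.+1) a k * g k t) =
    (fun t => a n * g n t + \sum_(k < n) a k * g k t).
  by apply: funext => x; rewrite big_ord_recr /= addrC.
case: (hT) => _ hlin _.
rewrite hlin //; last first.
  by apply: (@C0g_sum R R n (fun k t => a k * g k t)) => k; apply: C0g_scale; exact: hg.
rewrite IH; apply: funext => t; rewrite big_ord_recr /= addrC.
by [].
Qed.

Lemma T_diff (R : realType) (T : (R -> R) -> (R -> R)) : bdd_op (@C0R R) T ->
  exists2 C, 0 <= C & forall g h eta, C0R g -> C0R h ->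
    (forall t, `|g t - h t| <= eta) -> forall t, `|T g t - T h t| <= C * eta.
Proof.
move=> hT; have [C C0 hC] := bdd_bound hT; exists C => // g h eta hg hh hgh t.
case: (hT) => _ hlin _.
have hw : C0R (fun x => -1 * h x + g x) by exact: C0g_lin.
have := hlin (-1) _ _ hh hg => /(congr1 (fun F => F t)) /= E.
have -> : T g t - T h t = T (fun x => -1 * h x + g x) t by rewrite E mulN1r addrC.
apply: (le_trans (hC _ hw t)); apply: ler_wpM2l => //.
apply: (supn_le 0) => y; rewrite mulN1r addrC; exact: hgh.
Qed.


Lemma C0_unif (R : realType) d (f : 'rV[R]_d -> R) : C0 f ->
  forall e : R, 0 < e -> exists2 del : R, 0 < del &
    forall x y, `|x - y| < del -> `|f x - f y| < e.
Proof.
move=> [cf vf] e e0.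
have e2 : 0 < e / 2 by rewrite divr_gt0.
have [M hM] := vf _ e2.
have r0 : 0 < `|M| + 1 by have := normr_ge0 M; lra.
have cK := @ball_compact R d _ r0.
have H := (compact_near_coveringP _).1 cK R (0^'+)
  (fun del x' => forall y, `|x' - y| < del -> `|f x' - f y| < e) _.
have {H} : \forall del \near 0^'+,
    [set x : 'rV[R]_d | `|x| <= `|M| + 1] `<=`
    (fun x' => forall y, `|x' - y| < del -> `|f x' - f y| < e).
  apply: H => x Kx.
  have /cvgrPdist_lt/(_ _ e2) := cf x.
  move=> /nbhs_ballP [eta /= eta0 heta].
  have eta2 : 0 < eta / 2 by rewrite divr_gt0.
  have Hn := @near_ball _ _ x (eta / 2) eta2.
  near=> x' del.
  have hb : ball x (eta / 2) x' by exact: (near Hn x').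
  have hx' : `|x - x'| < eta / 2 by move: hb; rewrite -ball_normE.
  have hdel : del < eta / 2 by exact: (near (nbhs_right_lt eta2) del).
  move=> y /= hy.
  have h1 : `|f x - f x'| < e / 2.
    by apply: heta; rewrite -ball_normE /ball_ /=; lra.
  have h2 : `|f x - f y| < e / 2.
    apply: heta; rewrite -ball_normE /ball_ /=.
    have := ler_distD x' x y; lra.
  have := ler_distD (f x) (f x') (f y); rewrite distrC in h1; lra.
move=> H.
have : \forall del \near 0^'+,
    ([set x : 'rV[R]_d | `|x| <= `|M| + 1] `<=`
    (fun x' => forall y, `|x' - y| < del -> `|f x' - f y| < e)) /\ 0 < del /\ del < 1.
  near=> del; split; [|split].
  - near: del; exact: H.
  - near: del; exact: nbhs_right_gt.
  - near: del; exact: nbhs_right_lt.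
move=> /filter_ex [del [hK [del0 del1]]].
exists del => // x y hxy.
have [hx|hx] := leP `|x| (`|M| + 1); first exact: hK.
have hMx : M < `|x| by have := ler_norm M; lra.
have hMy : M < `|y|.
  have := ler_distD y x 0; rewrite !subr0.
  have := ler_norm M; lra.
have := hM _ hMx; have := hM _ hMy; have := ler_normB (f x) (f y); lra.
Unshelve. all: by end_near.
Qed.


Definition rr (R : realType) (s : R) : R := Num.min 1 (Num.max 0 s).
Definition uu (R : realType) (del : R) (N k : nat) (t : R) : R :=
  rr (t / del + N%:R + 1 - k%:R).
Definition phi (R : realType) (del : R) (N k : nat) (t : R) : R :=
  uu del N k t - uu del N k.+1 t.
Definition cc (R : realType) (del : R) (N k : nat) : R := (k%:R - N%:R) * del.

Lemma rr_mono (R : realType) (a b : R) : a <= b -> rr a <= rr b.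
Proof. by move=> ab; rewrite /rr !maxEle !minEle; repeat case: ifP; move=> *; lra. Qed.

Lemma rr_01 (R : realType) (a : R) : 0 <= rr a <= 1.
Proof. by rewrite /rr !maxEle !minEle; repeat case: ifP; move=> *; apply/andP; split; lra. Qed.

Lemma rr0 (R : realType) (a : R) : a <= 0 -> rr a = 0.
Proof. by move=> ab; rewrite /rr !maxEle !minEle; repeat case: ifP; move=> *; lra. Qed.

Lemma rr1 (R : realType) (a : R) : 1 <= a -> rr a = 1.
Proof. by move=> ab; rewrite /rr !maxEle !minEle; repeat case: ifP; move=> *; lra. Qed.

Lemma rr_lip (R : realType) (a b : R) : `|rr a - rr b| <= `|a - b|.
Proof.
have h1 := ler_norm (a - b); have h2 := ler_norm (b - a); rewrite distrC in h2.
by rewrite ler_norml /rr !maxEle !minEle; repeat case: ifP; move=> *; apply/andP; split; lra.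
Qed.

Lemma lipL_continuous (R : realType) (V W : normedModType R) (h : V -> W) (L : R) :
  0 <= L -> (forall a b, `|h a - h b| <= L * `|a - b|) -> continuous h.
Proof.
move=> L0 hL x; apply/cvgrPdist_lt => e e0.
have eL : 0 < e / (L + 1) by rewrite divr_gt0 //; lra.
near=> y; apply: le_lt_trans (hL x y) _.
have : `|x - y| < e / (L + 1).
  near: y; exact: (@cvgr_dist_lt _ _ _ _ _ (fun y => y) x (@cvg_id _ _) _ eL).
rewrite ltr_pdivlMr; last by lra.
have := normr_ge0 (x - y); nra.
Unshelve. all: by end_near.
Qed.

Lemma uu_lip (R : realType) (del : R) N k t s : 0 < del ->
  `|uu del N k t - uu del N k s| <= del^-1 * `|t - s|.
Proof.
move=> d0; apply: le_trans (rr_lip _ _) _.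
have -> : t / del + N%:R + 1 - k%:R - (s / del + N%:R + 1 - k%:R) = del^-1 * (t - s).
  by rewrite mulrBr ![del^-1 * _]mulrC; ring.
by rewrite normrM ger0_norm // invr_ge0 ltW.
Qed.

Lemma phi_cont (R : realType) (del : R) N k : 0 < del -> continuous (phi del N k).
Proof.
move=> d0; apply: (@lipL_continuous _ _ _ _ (2 * del^-1)).
  by rewrite mulr_ge0 // invr_ge0 ltW.
move=> a b; rewrite /phi.
have h1 := uu_lip N k a b d0; have h2 := uu_lip N k.+1 a b d0.
have := ler_normD (uu del N k a - uu del N k b) (uu del N k.+1 b - uu del N k.+1 a).
rewrite (distrC (uu del N k.+1 b)).
have -> : uu del N k a - uu del N k b + (uu del N k.+1 b - uu del N k.+1 a) =
  uu del N k a - uu del N k.+1 a - (uu del N k b - uu del N k.+1 b) by ring.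
lra.
Qed.

Lemma uu_S (R : realType) (del : R) N k t :
  uu del N k.+1 t = rr (t / del + N%:R + 1 - k%:R - 1).
Proof. by rewrite /uu -addn1 natrD opprD addrA. Qed.

Lemma uu_mono (R : realType) (del : R) N m n t : (m <= n)%N ->
  uu del N n t <= uu del N m t.
Proof.
move=> mn; apply: rr_mono; rewrite lerD2l lerN2 ler_nat //.
Qed.

Lemma phi_ge0 (R : realType) (del : R) N k t : 0 <= phi del N k t.
Proof. by rewrite /phi subr_ge0 uu_mono. Qed.

Lemma phi_supp (R : realType) (del : R) N k t : 0 < del ->
  phi del N k t != 0 -> `|t - cc del N k| < del.
Proof.
move=> d0; rewrite /phi uu_S {1}/uu.
set a := t / del + N%:R + 1 - k%:R => hne.
have [a0|a0] := leP a 0.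
  by move: hne; rewrite !rr0 ?subrr ?eqxx //; lra.
have [a2|a2] := leP 2 a.
  by move: hne; rewrite !rr1 ?subrr ?eqxx //; lra.
have -> : t - cc del N k = del * (a - 1).
  rewrite /a /cc; field; lra.
rewrite normrM ger0_norm ?ltW // -ltr_pdivlMl // mulVf ?gt_eqF //.
rewrite ltr_norml; lra.
Qed.

Lemma sum_phi (R : realType) (del : R) N n t :
  \sum_(k < n) phi del N k t = uu del N 0 t - uu del N n t.
Proof.
elim: n => [|n IH]; first by rewrite big_ord0 subrr.
by rewrite big_ord_recr /= IH /phi; ring.
Qed.

Lemma sum_phi_01 (R : realType) (del : R) N n t :
  0 <= \sum_(k < n) phi del N k t <= 1.
Proof.
rewrite sum_phi subr_ge0 uu_mono //=.
have := rr_01 (t / del + N%:R + 1 - 0%:R); have := rr_01 (t / del + N%:R + 1 - n%:R).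
rewrite /uu => /andP[? ?] /andP[? ?]; lra.
Qed.

Lemma sum_phi_1 (R : realType) (del : R) N t : 0 < del ->
  `|t| <= N%:R * del -> \sum_(k < (2 * N).+1) phi del N k t = 1.
Proof.
move=> d0 ht; rewrite sum_phi /uu rr1; last first.
  have : - (N%:R) <= t / del.
    rewrite ler_pdivlMr // mulNr; move: ht; rewrite ler_norml => /andP[? ?]; lra.
  lra.
rewrite rr0 ?subr0 //.
have : t / del <= N%:R.
  rewrite ler_pdivrMr //; move: ht; rewrite ler_norml => /andP[? ?]; lra.
rewrite -addn1 natrD natrM; lra.
Qed.

Lemma phi_C0R (R : realType) (del : R) N k : 0 < del -> C0R (phi del N k).
Proof.
move=> d0; split; first exact: phi_cont.
move=> e e0; exists (`|cc del N k| + del) => t ht.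
have -> : phi del N k t = 0.
  apply/eqP; apply: contraLR ht => /(phi_supp d0) h.
  rewrite -leNgt; have := ler_distD (cc del N k) t 0; rewrite !subr0.
  have := normr_ge0 t; lra.
by rewrite normr0.
Qed.


Definition fe (R : realType) d (f : 'rV[R]_d -> R) (j : 'I_d) (del : R) (N : nat)
  (x : 'rV[R]_d) : R :=
  \sum_(k < (2 * N).+1) phi del N k (x 0 j) * f (upd x j (cc del N k)).

Lemma upd_self (R : realType) d (x : 'rV[R]_d) j : upd x j (x 0 j) = x.
Proof. by apply/rowP => l; rewrite /upd !mxE; case: eqP => // ->. Qed.

Lemma approx_fe (R : realType) d (f : 'rV[R]_d -> R) (j : 'I_d) : C0 f ->
  forall eps : R, 0 < eps -> exists del N, 0 < del /\
    forall x, `|f x - fe f j del N x| <= eps.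
Proof.
move=> hf eps e0.
have e2 : 0 < eps / 2 by rewrite divr_gt0.
have [del d0 hdel] := C0_unif hf e2.
case: hf => _ vf; have [M hM] := vf _ e2.
pose N := (Num.truncn (`|M| / del)).+1.
have hN : `|M| < N%:R * del.
  by rewrite -ltr_pdivrMr //; exact: truncnS_gt.
exists del, N; split => // x.
set t := x 0 j.
pose s := \sum_(k < (2 * N).+1) phi del N k t.
have E : f x - fe f j del N x = (1 - s) * f x +
    \sum_(k < (2 * N).+1) phi del N k t * (f x - f (upd x j (cc del N k))).
  rewrite /fe /s [X in _ = _ + X](eq_bigr (fun k : 'I_(2 * N).+1 =>
     phi del N k t * f x - phi del N k t * f (upd x j (cc del N k)))); last first.
    by move=> k _; rewrite mulrBr.
  rewrite [X in _ = _ + X]sumrB -mulr_suml /t; ring.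
have B1 : `|\sum_(k < (2 * N).+1) phi del N k t * (f x - f (upd x j (cc del N k)))|
    <= eps / 2.
  apply: le_trans (ler_norm_sum _ _ _) _.
  apply: (@le_trans _ _ (\sum_(k < (2 * N).+1) phi del N k t * (eps / 2))).
    apply: ler_sum => k _; rewrite normrM ger0_norm ?phi_ge0 //.
    case: (eqVneq (phi del N k t) 0) => [->|hne]; first by rewrite !mul0r.
    apply: ler_wpM2l; first exact: phi_ge0.
    apply: ltW; apply: hdel; rewrite -{1}(upd_self x j).
    apply: le_lt_trans (upd_lip_t _ _ _ _) _; exact: phi_supp.
  rewrite -mulr_suml; have := sum_phi_01 del N (2 * N).+1 t.
  rewrite -/s => /andP[? ?]; nra.
have B2 : `|(1 - s) * f x| <= eps / 2.
  have [ht|ht] := leP `|t| (N%:R * del).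
    by rewrite /s sum_phi_1 // subrr mul0r normr0 ltW.
  have hx : M < `|x|.
    have := row_norm_ge x j; rewrite -/t; have := ler_norm M; lra.
  have := hM _ hx; have := sum_phi_01 del N (2 * N).+1 t; rewrite -/s.
  move=> /andP[? ?] ?; rewrite normrM ger0_norm; last by lra.
  have := normr_ge0 (f x); nra.
rewrite E; apply: le_trans (ler_normD _ _) _; lra.
Qed.


Lemma C0g_closed (R : realType) (V : normedModType R) (g : V -> R) :
  (forall eps : R, 0 < eps -> exists h, C0g h /\ forall x, `|g x - h x| <= eps) ->
  C0g g.
Proof.
move=> H; split.
  move=> x; apply/cvgrPdist_lt => e e0.
  have e3 : 0 < e / 3 by rewrite divr_gt0.
  have [h [[ch _] hgh]] := H _ e3.
  have /cvgrPdist_lt/(_ _ e3) := ch x.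
  apply: filterS => y hy.
  have := ler_distD (h x) (g x) (g y); have := ler_distD (h y) (h x) (g y).
  have := hgh x; have := hgh y; rewrite (distrC (h y)); lra.
move=> e e0.
have e2 : 0 < e / 2 by rewrite divr_gt0.
have [h [[_ vh] hgh]] := H _ e2.
have [M hM] := vh _ e2; exists M => x xM.
have := hM _ xM; have := hgh x; have := ler_distD (h x) (g x) 0; rewrite !subr0; lra.
Qed.

Lemma fe_C0 (R : realType) d (f : 'rV[R]_d -> R) j del N : C0 f -> 0 < del ->
  C0 (fe f j del N).
Proof.
move=> hf d0; rewrite /fe.
have h : forall k, C0 (fun x => phi del N k (x 0 j) * f (upd x j (cc del N k))).
  by move=> k; apply: C0_prod => //; exact: phi_C0R.
have := @C0g_sum R _ (2 * N).+1 _ h.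
by [].
Qed.

Lemma slice_fe (R : realType) d (f : 'rV[R]_d -> R) j del N y :
  slice (fe f j del N) j y =
  (fun t => \sum_(k < (2 * N).+1) f (upd y j (cc del N k)) * phi del N k t).
Proof.
apply: funext => t; rewrite sliceE /fe; apply: eq_bigr => k _.
by rewrite upd_j upd_upd mulrC.
Qed.

Lemma Vop_fe (R : realType) d (T : (R -> R) -> (R -> R)) (f : 'rV[R]_d -> R) j del N :
  bdd_op (@C0R R) T -> 0 < del ->
  Vop j T (fe f j del N) =
  (fun x => \sum_(k < (2 * N).+1) T (phi del N k) (x 0 j) * f (upd x j (cc del N k))).
Proof.
move=> hT d0; apply: funext => x.
rewrite /Vop slice_fe (T_sum (g := phi del N) hT (2 * N).+1 (fun k => f (upd x j (cc del N k)))); last first.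
  by move=> k; exact: phi_C0R.
by apply: eq_bigr => k _; rewrite mulrC.
Qed.

Lemma supn_slice (R : realType) d (f : 'rV[R]_d -> R) j x : C0 f ->
  supn (slice f j x) <= supn f.
Proof.
move=> hf; have [B hB] := C0_bounded hf.
apply: (supn_le 0) => t; rewrite sliceE; exact: supn_ge.
Qed.

Lemma Vop_C0 (R : realType) d (T : (R -> R) -> (R -> R)) (j : 'I_d) (f : 'rV[R]_d -> R) :
  bdd_op (@C0R R) T -> C0 f -> C0 (Vop j T f).
Proof.
move=> hT hf; rewrite C0E; apply: C0g_closed => eps e0.
have [C Cge0 hC] := T_diff hT.
have C1 : 0 < C + 1 by lra.
have eta0 : 0 < eps / (C + 1) by rewrite divr_gt0.
have [del [N [d0 happ]]] := approx_fe j hf eta0.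
exists (Vop j T (fe f j del N)); split.
  rewrite Vop_fe //.
  have h : forall k, C0 (fun x : 'rV[R]_d => T (phi del N k) (x 0 j) * f (upd x j (cc del N k))).
    move=> k; apply: C0_prod => //.
    by case: hT => hmap _ _; apply: hmap; exact: phi_C0R.
  have := @C0g_sum R _ (2 * N).+1 _ h.
  by [].
move=> x; rewrite /Vop.
apply: le_trans (hC _ _ (eps / (C + 1)) (slice_C0 j x hf)
   (slice_C0 j x (fe_C0 j N hf d0)) _ (x 0 j)) _.
  by move=> t; rewrite !sliceE; exact: happ.
rewrite mulrA ler_pdivrMr //; nra.
Qed.


Lemma Vop_bdd (R : realType) d (T : (R -> R) -> (R -> R)) (j : 'I_d) :
  bdd_op (@C0R R) T -> bdd_op (@C0 R d) (Vop j T).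
Proof.
move=> hT; have [C Cge0 hC] := bdd_bound hT; case: (hT) => hmap hlin _.
split.
- by move=> f hf; exact: Vop_C0.
- move=> a f g hf hg; apply: funext => x.
  have := hlin a _ _ (slice_C0 j x hf) (slice_C0 j x hg).
  by move=> /(congr1 (fun F => F (x 0 j))).
- exists C => f hf.
  apply: (supn_le (0 : 'rV[R]_d)) => y; rewrite /Vop.
  apply: le_trans (hC _ (slice_C0 j y hf) _) _.
  by apply: ler_wpM2l => //; apply: supn_slice.
Qed.

Lemma Vop_close (R : realType) d (T : (R -> R) -> (R -> R)) :
  bdd_op (@C0R R) T -> exists2 C, 0 <= C & forall (j : 'I_d) f g eta,
    C0 f -> C0 g -> (forall x, `|f x - g x| <= eta) ->
    forall x, `|Vop j T f x - Vop j T g x| <= C * eta.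
Proof.
move=> hT; have [C Cge0 hC] := T_diff hT; exists C => // j f g eta hf hg hfg x.
rewrite /Vop; apply: (hC _ _ _ (slice_C0 j x hf) (slice_C0 j x hg)).
by move=> t; rewrite !sliceE.
Qed.

Lemma opnorm_Vop (R : realType) d (S T : (R -> R) -> (R -> R)) (j : 'I_d) :
  bdd_op (@C0R R) S -> bdd_op (@C0R R) T ->
  opnorm (@C0 R d) (op_add (Vop j S) (op_opp (Vop j T))) <=
  opnorm (@C0R R) (op_add S (op_opp T)).
Proof.
move=> hS hT.
have [CS CS0 hCS] := bdd_bound hS; have [CT CT0 hCT] := bdd_bound hT.
set U := op_add S (op_opp T).
have Ub : forall g, C0R g -> forall t, `|U g t| <= (CS + CT) * supn g.
  move=> g hg t; rewrite /U /op_add /op_opp.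
  apply: le_trans (ler_normD _ _) _; rewrite normrN mulrDl.
  exact: lerD (hCS _ hg t) (hCT _ hg t).
have hub : has_ubound [set supn (U g) | g in [set g | C0R g /\ supn g <= 1]].
  exists (CS + CT) => _ [g [hg hg1] <-]; apply: (supn_le (0 : R)) => t.
  apply: le_trans (Ub g hg t) _.
  by rewrite -{2}(mulr1 (CS + CT)); apply: ler_wpM2l => //; rewrite addr_ge0.
rewrite {1}/opnorm; apply: ge_sup.
  exists (supn (op_add (Vop j S) (op_opp (Vop j T)) (fun _ => 0))).
  exists (fun _ => 0) => //; split; first exact: C0g0.
  by apply: (supn_le (0 : 'rV[R]_d)) => y; rewrite normr0.
move=> _ [f [hf hf1] <-]; apply: (supn_le (0 : 'rV[R]_d)) => x.
change (`|U (slice f j x) (x 0 j)| <= opnorm (@C0R R) U).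
have hB : forall t, `|U (slice f j x) t| <= (CS + CT) * supn (slice f j x).
  exact: Ub (slice_C0 j x hf).
apply: le_trans (supn_ge (x 0 j) hB) _.
apply: (ub_le_sup hub); exists (slice f j x) => //; split; first exact: slice_C0.
exact: le_trans (supn_slice j x hf) hf1.
Qed.

Lemma Vop_sum (R : realType) d (T : (R -> R) -> (R -> R)) (j : 'I_d) n
  (b : nat -> 'rV[R]_d -> R) (F : nat -> 'rV[R]_d -> R) :
  bdd_op (@C0R R) T -> (forall k y t, b k (upd y j t) = b k y) ->
  (forall k y, C0R (slice (F k) j y)) ->
  Vop j T (fun y => \sum_(k < n) b k y * F k y) =
  (fun y => \sum_(k < n) b k y * Vop j T (F k) y).
Proof.
move=> hT hb hF; apply: funext => y; rewrite /Vop.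
have -> : slice (fun y => \sum_(k < n) b k y * F k y) j y =
    (fun t => \sum_(k < n) b k y * slice (F k) j y t).
  by apply: funext => t; rewrite sliceE; apply: eq_bigr => k _; rewrite hb.
have := T_sum (g := fun k => slice (F k) j y) hT n (fun k => b k y) (fun k => hF k y).
by move=> /(congr1 (fun G => G (y 0 j))).
Qed.

Lemma Vop_coord (R : realType) d (T : (R -> R) -> (R -> R)) (j : 'I_d) (g : R -> R) :
  Vop j T (fun y : 'rV[R]_d => g (y 0 j)) = (fun y => T g (y 0 j)).
Proof.
apply: funext => y; rewrite /Vop.
have -> : slice (fun y : 'rV[R]_d => g (y 0 j)) j y = g.
  by apply: funext => t; rewrite sliceE upd_j.
by [].
Qed.

Lemma eq_of_close (R : realType) (a b : R) : (forall e, 0 < e -> `|a - b| <= e) -> a = b.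
Proof.
move=> h; have [//|ne] := eqVneq a b.
have p : 0 < `|a - b| by rewrite normr_gt0 subr_eq0.
have := h _ (divr_gt0 p (ltr0Sn _ 1)); lra.
Qed.


Lemma comm_fe (R : realType) d (S T : (R -> R) -> (R -> R)) (i j : 'I_d)
  (f : 'rV[R]_d -> R) del N : i != j ->
  bdd_op (@C0R R) S -> bdd_op (@C0R R) T -> C0 f -> 0 < del ->
  Vop i S (Vop j T (fe f j del N)) = Vop j T (Vop i S (fe f j del N)).
Proof.
move=> ij hS hT hf d0.
have ji : j != i by rewrite eq_sym.
pose Fk k := fun y : 'rV[R]_d => f (upd y j (cc del N k)).
pose Pk k := fun y : 'rV[R]_d => phi del N k (y 0 j).
have slFk : forall k y, slice (Fk k) i y = slice f i (upd y j (cc del N k)).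
  by move=> k y; apply: funext => s; rewrite !sliceE /Fk upd_comm.
have CFk : forall k y, C0R (slice (Fk k) i y).
  by move=> k y; rewrite slFk; exact: slice_C0.
have slPk : forall k y, slice (Pk k) j y = phi del N k.
  by move=> k y; apply: funext => t; rewrite sliceE /Pk upd_j.
have CPk : forall k y, C0R (slice (Pk k) j y).
  by move=> k y; rewrite slPk; exact: phi_C0R.
have VPk : forall k, Vop j T (Pk k) = (fun y => T (phi del N k) (y 0 j)).
  by move=> k; exact: Vop_coord.
have VFk_inv : forall k y t, Vop i S (Fk k) (upd y j t) = Vop i S (Fk k) y.
  move=> k y t; rewrite /Vop !slFk upd_upd upd_l //.
have fe1 : fe f j del N = (fun y => \sum_(k < (2 * N).+1) Fk k y * Pk k y).
  by apply: funext => y; rewrite /fe; apply: eq_bigr => k _; rewrite mulrC.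
have fe2 : fe f j del N = (fun y => \sum_(k < (2 * N).+1) Pk k y * Fk k y).
  by [].
have L1 : Vop j T (fe f j del N) =
    (fun y => \sum_(k < (2 * N).+1) Vop j T (Pk k) y * Fk k y).
  rewrite fe1 (@Vop_sum R d T j (2 * N).+1 Fk Pk) //; last first.
    by move=> k y t; rewrite /Fk upd_upd.
  by apply: funext => y; apply: eq_bigr => k _; rewrite mulrC.
have L2 : Vop i S (Vop j T (fe f j del N)) =
    (fun y => \sum_(k < (2 * N).+1) Vop j T (Pk k) y * Vop i S (Fk k) y).
  rewrite L1 (@Vop_sum R d S i (2 * N).+1 (fun k => Vop j T (Pk k)) Fk) //.
  by move=> k y s; rewrite VPk /= upd_l.
have R1 : Vop i S (fe f j del N) =
    (fun y => \sum_(k < (2 * N).+1) Vop i S (Fk k) y * Pk k y).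
  rewrite fe2 (@Vop_sum R d S i (2 * N).+1 Pk Fk) //; last first.
    by move=> k y s; rewrite /Pk upd_l.
  by apply: funext => y; apply: eq_bigr => k _; rewrite mulrC.
have R2 : Vop j T (Vop i S (fe f j del N)) =
    (fun y => \sum_(k < (2 * N).+1) Vop i S (Fk k) y * Vop j T (Pk k) y).
  by rewrite R1 (@Vop_sum R d T j (2 * N).+1 (fun k => Vop i S (Fk k)) Pk).
rewrite L2 R2; apply: funext => y; apply: eq_bigr => k _; exact: mulrC.
Qed.


Lemma comm_all (R : realType) d (S T : (R -> R) -> (R -> R)) (i j : 'I_d)
  (f : 'rV[R]_d -> R) : i != j ->
  bdd_op (@C0R R) S -> bdd_op (@C0R R) T -> C0 f ->
  Vop i S (Vop j T f) = Vop j T (Vop i S f).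
Proof.
move=> ij hS hT hf; apply: funext => x; apply: eq_of_close => eps e0.
have [CS CS0 hCS] := Vop_close d hS; have [CT CT0 hCT] := Vop_close d hT.
have K0 : 0 < 2 * CS * CT + 1 by have := mulr_ge0 CS0 CT0; lra.
have eta0 : 0 < eps / (2 * CS * CT + 1) by rewrite divr_gt0.
set eta := eps / (2 * CS * CT + 1).
have [del [N [d0 happ]]] := approx_fe j hf eta0.
set g := fe f j del N.
have hg : C0 g by exact: fe_C0.
have E := @comm_fe R d S T i j f del N ij hS hT hf d0.
have h1 : `|Vop i S (Vop j T f) x - Vop i S (Vop j T g) x| <= CS * (CT * eta).
  apply: hCS; [exact: Vop_C0 | exact: Vop_C0 |].
  by move=> y; apply: hCT.
have h2 : `|Vop j T (Vop i S f) x - Vop j T (Vop i S g) x| <= CT * (CS * eta).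
  apply: hCT; [exact: Vop_C0 | exact: Vop_C0 |].
  by move=> y; apply: hCS.
rewrite -/g in E; rewrite E in h1.
have h3 := ler_distD (Vop j T (Vop i S g) x) (Vop i S (Vop j T f) x) (Vop j T (Vop i S f) x).
rewrite (distrC (Vop j T (Vop i S g) x)) in h3.
have : CS * (CT * eta) + CT * (CS * eta) <= eps.
  have -> : CS * (CT * eta) + CT * (CS * eta) = (2 * CS * CT) * eta by ring.
  rewrite /eta mulrA ler_pdivrMr //; have := mulr_ge0 CS0 CT0; nra.
lra.
Qed.

Lemma slice_Vop (R : realType) d (T : (R -> R) -> (R -> R)) (j : 'I_d) f x :
  slice (Vop j T f) j x = T (slice f j x).
Proof.
apply: funext => t; rewrite sliceE /Vop upd_j.
have -> : slice f j (upd x j t) = slice f j x.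
  by apply: funext => s; rewrite !sliceE upd_upd.
by [].
Qed.

Unset Implicit Arguments.

Theorem lemma1p3p2 (R : realType) (d : nat) :
  (* (1) existence and uniqueness of the bounded operator T^j *)
  (forall (j : 'I_d) (T : (R -> R) -> (R -> R)), bdd_op (@C0R R) T ->
     exists U, [/\ bdd_op (@C0 R d) U,
        (forall f, @C0 R d f -> forall x, U f x = T (slice f j x) (x 0 j))
      & forall U', bdd_op (@C0 R d) U' ->
          (forall f, @C0 R d f -> forall x, U' f x = T (slice f j x) (x 0 j)) ->
          op_eq (@C0 R d) U' U]) /\
  (* (2) V_j : T |-> T^j is a continuous algebra homomorphism *)
  (forall j : 'I_d,
     (forall S T, bdd_op (@C0R R) S -> bdd_op (@C0R R) T ->
        [/\ op_eq (@C0 R d) (Vop j (op_add S T)) (op_add (Vop j S) (Vop j T)),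
            (forall a : R, op_eq (@C0 R d) (Vop j (op_scale a S)) (op_scale a (Vop j S)))
          & op_eq (@C0 R d) (Vop j (S \o T)) (Vop j S \o Vop j T)]) /\
     (forall T, bdd_op (@C0R R) T -> forall e : R, 0 < e ->
        exists2 delta : R, 0 < delta & forall S, bdd_op (@C0R R) S ->
          opnorm (@C0R R) (op_add S (op_opp T)) < delta ->
          opnorm (@C0 R d) (op_add (Vop j S) (op_opp (Vop j T))) < e)) /\
  (* (3) commutation for i <> j *)
  (forall (i j : 'I_d) (S T : (R -> R) -> (R -> R)), i != j ->
     bdd_op (@C0R R) S -> bdd_op (@C0R R) T ->
     forall f, @C0 R d f -> Vop i S (Vop j T f) = Vop j T (Vop i S f)).
Proof.
split.
  move=> j T hT; exists (Vop j T); split.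
  - exact: Vop_bdd.
  - by [].
  - move=> U' _ hU' f hf; apply: funext => x; exact: hU'.
split.
  move=> j; split.
    move=> S T hS hT; split.
    - by [].
    - by [].
    - move=> f hf; apply: funext => x.
      by rewrite /= [in RHS]/Vop slice_Vop.
  move=> T hT e e0; exists e => // S hS hlt.
  exact: le_lt_trans (opnorm_Vop j hS hT) hlt.
move=> i j S T ij hS hT f hf; exact: comm_all.
Qed.
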